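(* If $(f_m)$ is a Riesz sequence in $\mathcal{L}^2(I)$, then $(f_m*_T0)$ is also a Riesz sequence in $\mathcal{L}^2(I)$.
   Context: Let $N\ge 2$, $I=[x_0,x_N]$, $\Delta: x_0<\dots<x_N$ a partition, $L_n(x)=a_nx+b_n$ affine with $L_n(x_0)=x_{n-1}$, $L_n(x_N)=x_n$, $I_1=[x_0,x_1]$, $I_n=(x_{n-1},x_n]$ for $n\ge2$, and $\alpha=(\alpha_1,\dots,\alpha_N)\in(\mathcal{L}^\infty(I))^N$ with $\Lambda:=\operatorname{ess\,sup}\{|\alpha_n(x)|:x\in I,n=1,\dots,N\}<1$. For $f,b\in\mathcal{L}^2(I)$, $f*_Tb$ is the unique fixed point in $\mathcal{L}^2(I)$ of the contraction $Tg(x):=f(x)+\alpha_n(L_n^{-1}(x))(g-b)(L_n^{-1}(x))$, $x\in I_n$; $0$ is the null function. *)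

(* Defs.v *)
From HB Require Import structures.
From mathcomp Require Import all_boot all_order all_algebra.
From mathcomp Require Import all_classical all_reals all_analysis.
Set Implicit Arguments. Unset Strict Implicit. Unset Printing Implicit Defensive.
Import Order.TTheory GRing.Theory Num.Theory.
Local Open Scope classical_set_scope.
Local Open Scope ring_scope.

Section FracConv.
Variable R : realType.
Let mu := (@lebesgue_measure R).

Definition Iint (x : nat -> R) (N : nat) : set R := [set` `[x 0%N, x N]].

Definition Icell (x : nat -> R) (n : nat) : set R :=
  if n == 1%N then [set` `[x 0%N, x 1%N]] else [set` `]x n.-1, x n]].

(* L_n(t) = a_n t + b_n, the unique affine map with L_n(x_0) = x_{n-1},
   L_n(x_N) = x_n, and its inverse. *)
Definition Lmap (x : nat -> R) (N n : nat) (t : R) : R :=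
  x n.-1 + (x n - x n.-1) / (x N - x 0%N) * (t - x 0%N).
Definition Linv (x : nat -> R) (N n : nat) (t : R) : R :=
  x 0%N + (x N - x 0%N) / (x n - x n.-1) * (t - x n.-1).

Definition inL2 (x : nat -> R) (N : nat) (g : R -> R) : Prop :=
  measurable_fun (Iint x N) g /\
  (\int[mu]_(t in Iint x N) ((g t) ^+ 2)%:E < +oo)%E.

Definition frac_partition (x : nat -> R) (N : nat) : Prop :=
  (2 <= N)%N /\ forall i, (i < N)%N -> x i < x i.+1.

Definition scale_ok (x : nat -> R) (N : nat) (alpha : nat -> R -> R) : Prop :=
  (forall n, (1 <= n <= N)%N -> measurable_fun (Iint x N) (alpha n)) /\
  exists Lam : R, Lam < 1 /\
    forall n, (1 <= n <= N)%N ->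
      {ae mu, forall t, Iint x N t -> `|alpha n t| <= Lam}.

Definition Top (x : nat -> R) (N : nat) (alpha : nat -> R -> R)
  (f b g : R -> R) (t : R) : R :=
  f t + \sum_(1 <= n < N.+1)
    (\1_(Icell x n) t *
      (alpha n (Linv x N n t) * (g (Linv x N n t) - b (Linv x N n t)))).

(* g is (a representative of) f *_T b: the fixed point of T in L^2(I),
   equality meaning equality a.e. on I. *)
Definition is_frac_conv (x : nat -> R) (N : nat) (alpha : nat -> R -> R)
  (f b g : R -> R) : Prop :=
  inL2 x N g /\
  {ae mu, forall t, Iint x N t -> g t = Top x N alpha f b g t}.

Definition riesz_seq (x : nat -> R) (N : nat) (u : nat -> R -> R) : Prop :=
  (forall m, inL2 x N (u m)) /\
  exists A B : R, 0 < A /\ 0 < B /\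
    forall (n : nat) (c : nat -> R),
      ((A * \sum_(k < n) (c k) ^+ 2)%:E
        <= \int[mu]_(t in Iint x N) ((\sum_(k < n) c k * u k t) ^+ 2)%:E)%E /\
      (\int[mu]_(t in Iint x N) ((\sum_(k < n) c k * u k t) ^+ 2)%:E
        <= (B * \sum_(k < n) (c k) ^+ 2)%:E)%E.

End FracConv.

(* Main.v *)
Require Import Defs.
From HB Require Import structures.
From mathcomp Require Import all_boot all_order all_algebra.
From mathcomp Require Import all_classical all_reals all_analysis.
From mathcomp Require Import lra ring measurable_realfun.
Set Implicit Arguments. Unset Strict Implicit. Unset Printing Implicit Defensive.
Import Order.TTheory GRing.Theory Num.Theory numFieldNormedType.Exports.
Local Open Scope classical_set_scope.
Local Open Scope ring_scope.

Section Aux.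
Variable R : realType.
Local Notation mu := (@lebesgue_measure R).
Definition aff (p k : R) (t : R) : R := p + k * t.
Lemma maff (p k : R) : measurable_fun setT (aff p k).
Proof. by apply: measurable_realfun.measurable_funD => //; apply: measurable_realfun.measurable_funM. Qed.

Lemma maff' (p k : R) : measurable_fun (T:=measurableTypeR R) (U:=measurableTypeR R) setT (aff p k).
Proof. exact: maff. Qed.

Definition affpf (p k : R) : set (measurableTypeR R) -> \bar R :=
  @pushforward _ _ (measurableTypeR R) (measurableTypeR R) R mu (aff p k).
Section inst.
Variables p k : R.
Let f := aff p k.
Let mf := maff p k.
Local Open Scope ereal_scope.
Let pushforward0 : affpf p k set0 = 0.
Proof. by rewrite /affpf /pushforward preimage_set0 measure0. Qed.

Let pushforward_ge0 A : 0 <= affpf p k A.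
Proof. exact: measure_ge0. Qed.

Let pushforward_sigma_additive : semi_sigma_additive (affpf p k).
Proof.
move=> F mF tF mUF; rewrite /affpf /pushforward preimage_bigcup.
apply: measure_semi_sigma_additive.
- by move=> n; rewrite -[X in measurable X]setTI; exact: (@maff' p k measurableT _ (mF n)).
- apply/trivIsetP => /= i j _ _ ij; rewrite -preimage_setI.
  by move/trivIsetP : tF => /(_ _ _ _ _ ij) ->//; rewrite preimage_set0.
- by rewrite -preimage_bigcup -[X in measurable X]setTI; exact: (@maff' p k measurableT _ mUF).
Qed.

HB.instance Definition _ := isMeasure.Build _ _ _
  (affpf p k) pushforward0 pushforward_ge0 pushforward_sigma_additive.
End inst.

Lemma aff_meas (p k : R) (k0 : 0 < k) (A : set R) : measurable A ->
  mu A = (k%:E * mu (aff p k @^-1` A))%E.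
Proof.
move=> mA.
have := @lebesgue_measure_unique R (mscale (NngNum (ltW k0)) (affpf p k)) _ _ mA.
apply.
move=> _ [[a b]] _ <-.
change (mu `]a, b] = (k%:E * mu (aff p k @^-1` `]a, b]))%E).
have -> : aff p k @^-1` `]a, b] = `](a - p) / k, (b - p) / k]%classic.
  apply/seteqP; split => t /=; rewrite !in_itv /= /aff.
  - rewrite ltr_pdivrMr // ler_pdivlMr // [t * k]mulrC => /andP[h1 h2]; apply/andP; split; lra.
  - rewrite ltr_pdivrMr // ler_pdivlMr // [t * k]mulrC => /andP[h1 h2]; apply/andP; split; lra.
rewrite !lebesgue_measure_itv /= !lte_fin ltr_pM2r ?invr_gt0 // ltrD2r.
case: ifP => _; last by rewrite mule0.
by rewrite -EFinD -EFinM; congr EFin; field; rewrite gt_eqF.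
Qed.

Lemma aff_integral (p k : R) (k0 : 0 < k) (D : set R) (mD : measurable D)
  (phi : R -> \bar R) : measurable_fun setT phi -> (forall s, (0 <= phi s)%E) ->
  (\int[mu]_(t in aff p k @^-1` D) phi (aff p k t) =
   (k^-1)%:E * \int[mu]_(s in D) phi s)%E.
Proof.
move=> mphi phi0.
have mphiD : measurable_fun D phi by exact: measurable_funS mphi.
rewrite -(@ge0_integral_pushforward _ _ _ _ _ _ (maff' p k) mu D phi mD mphiD); last by move=> y _; exact: phi0.
have kinv0 : 0 <= k^-1 by rewrite invr_ge0 ltW.
rewrite (eq_measure_integral (mscale (NngNum kinv0) mu)).
all: try (by rewrite ge0_integral_mscale); try exact: maff'.
move=> ? A mA _.
change (mu (aff p k @^-1` A) = ((k^-1)%:E * mu A)%E).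
rewrite (@aff_meas p k k0 A mA) muleA -EFinM mulVf ?gt_eqF // mul1e //.
Qed.
Lemma sq_weight0 (a b s t u w : R) : 0 < s -> 0 < t -> s + t = 1 ->
  s * u = 1 -> t * w = 1 -> 0 < u -> 0 < w ->
  (a + b) ^+ 2 <= u * a ^+ 2 + w * b ^+ 2.
Proof.
move=> s0 t0 st su tw u0 w0.
have eu : u = 1 + t * u.
  have e1 : s = 1 - t by lra.
  by move: su; rewrite e1 mulrBl mul1r; lra.
have ew : w = 1 + s * w.
  have e1 : t = 1 - s by lra.
  by move: tw; rewrite e1 mulrBl mul1r; lra.
have PQ : (t * u) * (s * w) = 1 by rewrite mulrACA [t * s]mulrC -mulrACA su tw mulr1.
have h : 0 <= (s * w) * ((t * u) * a - b) ^+ 2 by apply: mulr_ge0; [apply: mulr_ge0; exact: ltW|exact: sqr_ge0].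
rewrite {1}eu {1}ew; move: h PQ; move: (t * u) (s * w) => P Q h PQ.
have e : Q * (P * a - b) ^+ 2 = (P * Q) * P * a ^+ 2 - 2 * (P * Q) * a * b + Q * b ^+ 2 by ring.
move: h; rewrite e PQ => h.
nra.
Qed.
Lemma sq_weight (a b s t : R) : 0 < s -> 0 < t -> s + t = 1 ->
  (a + b) ^+ 2 <= s^-1 * a ^+ 2 + t^-1 * b ^+ 2.
Proof.
move=> s0 t0 st; apply: (@sq_weight0 a b s t _ _ s0 t0 st).
- by rewrite mulfV // gt_eqF.
- by rewrite mulfV // gt_eqF.
- by rewrite invr_gt0.
- by rewrite invr_gt0.
Qed.

Lemma int_weight (D : set R) (mD : measurable D) (u v : R -> R) (s t : R) :
  measurable_fun D u -> measurable_fun D v -> 0 < s -> 0 < t -> s + t = 1 ->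
  (\int[mu]_(y in D) ((u y + v y) ^+ 2)%:E <=
   (s^-1)%:E * \int[mu]_(y in D) ((u y) ^+ 2)%:E +
   (t^-1)%:E * \int[mu]_(y in D) ((v y) ^+ 2)%:E)%E.
Proof.
move=> mu_ mv s0 t0 st.
have mu2 : measurable_fun D (fun y => ((u y) ^+ 2)%:E).
  by apply/measurable_EFinP; exact: measurable_funX.
have mv2 : measurable_fun D (fun y => ((v y) ^+ 2)%:E).
  by apply/measurable_EFinP; exact: measurable_funX.
have si : (0 <= (s^-1)%:E)%E by rewrite lee_fin invr_ge0 ltW.
have ti : (0 <= (t^-1)%:E)%E by rewrite lee_fin invr_ge0 ltW.
rewrite -ge0_integralZl //; last by move=> y _; rewrite lee_fin sqr_ge0.
rewrite -[X in (_ <= _ + X)%E]ge0_integralZl //; last by move=> y _; rewrite lee_fin sqr_ge0.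
rewrite -ge0_integralD //; first last.
- by apply: emeasurable_funM => //; exact: measurable_cst.
- by move=> y _; rewrite mule_ge0 // lee_fin sqr_ge0.
- by apply: emeasurable_funM => //; exact: measurable_cst.
- by move=> y _; rewrite mule_ge0 // lee_fin sqr_ge0.
apply: ge0_le_integral => //.
- by move=> y _; rewrite lee_fin sqr_ge0.
- apply/measurable_EFinP; apply: measurable_funX; exact: measurable_funD.
- apply: emeasurable_funD; (apply: emeasurable_funM => //; exact: measurable_cst).
- by move=> y _; rewrite -!EFinM -EFinD lee_fin; exact: sq_weight.
Qed.

Lemma L2_lin (D : set R) (mD : measurable D) (u : nat -> R -> R) (c : nat -> R) :
  (forall k, measurable_fun D (u k)) ->
  (forall k, \int[mu]_(y in D) ((u k y) ^+ 2)%:E < +oo)%E ->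
  forall n, (\int[mu]_(y in D) ((\sum_(k < n) c k * u k y) ^+ 2)%:E < +oo)%E.
Proof.
move=> mu_ fu; elim=> [|n IH].
  under eq_integral do rewrite big_ord0 expr0n /=.
  by rewrite integral0.
have ms : measurable_fun D (fun y => \sum_(k < n) c k * u k y).
  by apply: measurable_sum => k; apply: measurable_funM => //; exact: measurable_cst.
have mcu : measurable_fun D (fun y => c n * u n y).
  by apply: measurable_funM => //; exact: measurable_cst.
under eq_integral do rewrite big_ord_recr /=.
have h2 : (0 : R) < 1 / 2 by [].
have h22 : 1 / 2 + 1 / 2 = 1 :> R by field.
have W := @int_weight D mD _ _ _ _ ms mcu h2 h2 h22.
apply: le_lt_trans W _.
apply: lte_add_pinfty; apply: lte_mul_pinfty => //.
all: try by rewrite lee_fin invr_ge0.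
  have mu2 : measurable_fun D (fun y => ((u n y) ^+ 2)%:E).
    by apply/measurable_EFinP; exact: measurable_funX.
  under eq_integral do rewrite exprMn EFinM.
  rewrite ge0_integralZl //.
  + by apply: lte_mul_pinfty; [rewrite lee_fin sqr_ge0| by []|exact (fu n)].
  + by move=> y _; rewrite lee_fin sqr_ge0.
  + by rewrite lee_fin sqr_ge0.
Qed.
End Aux.

Section Main.
Variables (R : realType) (N : nat) (x : nat -> R) (alpha : nat -> R -> R).
Hypothesis Hx : forall i, (i < N)%N -> x i < x i.+1.
Hypothesis HN : (2 <= N)%N.
Local Notation mu := (@lebesgue_measure R).
Local Notation I := (Iint x N).

Lemma x_mono i j : (i <= j)%N -> (j <= N)%N -> x i <= x j.
Proof.
elim: j => [|j IH]; first by rewrite leqn0 => /eqP ->.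
rewrite leq_eqVlt => /orP[/eqP -> //|ij] jN.
apply: le_trans (IH ij (ltnW jN)) _.
exact/ltW/Hx.
Qed.

Lemma x_lt n : (1 <= n <= N)%N -> x n.-1 < x n.
Proof.
case: n => // n /andP[_ nN] /=; exact: Hx.
Qed.

Lemma x0N : x 0 < x N.
Proof.
apply: lt_le_trans (x_lt (n:=1) _) (x_mono _ _) => //.
- by rewrite /= (leq_trans _ HN).
- by rewrite (leq_trans _ HN).
Qed.

Lemma mI : measurable I.
Proof. exact: measurable_itv. Qed.

Definition Kc n := (x N - x 0) / (x n - x n.-1).
Definition pc n := x 0 - Kc n * x n.-1.

Lemma Linv_aff n : Linv x N n = aff (pc n) (Kc n).
Proof. by apply/funext => t; rewrite /Linv /aff /pc /Kc; ring. Qed.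

Lemma Kc_gt0 n : (1 <= n <= N)%N -> 0 < Kc n.
Proof.
move=> hn; rewrite /Kc divr_gt0 // subr_gt0; [exact: x0N | exact: x_lt].
Qed.

Lemma Kc_mul n : (1 <= n <= N)%N -> Kc n * (x n - x n.-1) = x N - x 0.
Proof.
move=> hn; rewrite /Kc mulfVK // gt_eqF // subr_gt0; exact: x_lt.
Qed.

Lemma cell_sub n t : Icell x n t -> x n.-1 <= t <= x n.
Proof.
rewrite /Icell; case: ifP => [/eqP -> /=|_ /=]; rewrite in_itv /=.
  by [].
by move=> /andP[h1 h2]; rewrite h2 ltW.
Qed.

Lemma Linv_in n t : (1 <= n <= N)%N -> x n.-1 <= t <= x n -> I (Linv x N n t).
Proof.
move=> hn /andP[h1 h2]; rewrite /Iint /= in_itv /=.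
have K0 := Kc_gt0 hn; have KM := Kc_mul hn.
rewrite Linv_aff /aff /pc.
apply/andP; split; nra.
Qed.

Lemma cells_disj n m t : (1 <= n <= N)%N -> (1 <= m <= N)%N ->
  Icell x n t -> Icell x m t -> n = m.
Proof.
wlog: n m / (n <= m)%N.
  move=> H hn hm cn cm; case: (leqP n m) => nm; first exact: H.
  by apply/esym/H => //; exact: ltnW.
move=> nm hn hm cn cm; apply/eqP; rewrite eqn_leq nm /=.
apply/negP => /negP; rewrite -ltnNge => nm'.
have m2 : (m != 1)%N by rewrite neq_ltn orbC (leq_ltn_trans _ nm') // ; case/andP: hn.
move: cm; rewrite /Icell (negbTE m2) /= in_itv /= => /andP[h1 _].
have := cell_sub cn => /andP[_ h2].
have := x_mono (i:=n) (j:=m.-1) _ _.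
have h3 : (n <= m.-1)%N by rewrite -ltnS prednK // (leq_ltn_trans _ nm').
have h4 : (m.-1 <= N)%N by rewrite (leq_trans (leq_pred m)) //; case/andP: hm.
move=> /(_ h3 h4) h5.
lra.
Qed.


Lemma sum_a : \sum_(1 <= n < N.+1) (Kc n)^-1 = 1.
Proof.
have -> : \sum_(1 <= n < N.+1) (Kc n)^-1 =
    \sum_(1 <= n < N.+1) (x n - x n.-1) / (x N - x 0).
  rewrite big_nat_cond [RHS]big_nat_cond; apply: eq_bigr => n /andP[hn _].
  by rewrite /Kc invf_div.
rewrite -mulr_suml big_add1 /= telescope_sumr // mulfV // gt_eqF // subr_gt0; exact: x0N.
Qed.

Lemma sq_cells (v : nat -> R) t :
  (\sum_(1 <= n < N.+1) \1_(Icell x n) t * v n) ^+ 2 <=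
  \sum_(1 <= n < N.+1) \1_(Icell x n) t * v n ^+ 2.
Proof.
have ge0 : forall m, 0 <= \sum_(1 <= n < m) \1_(Icell x n) t * v n ^+ 2.
  move=> m; apply: sumr_ge0 => n _; apply: mulr_ge0; last exact: sqr_ge0.
  by rewrite indicE.
suff H : forall m, (m <= N)%N ->
  (\sum_(1 <= n < m.+1) \1_(Icell x n) t * v n) ^+ 2 <=
  \sum_(1 <= n < m.+1) \1_(Icell x n) t * v n ^+ 2 by exact: H.
elim=> [_|m IH mN]; first by rewrite !big_geq // expr0n.
rewrite !(@big_nat_recr _ _ _ m.+1) //.
have [tC|tC] := boolP (t \in Icell x m.+1).
  have -> : \sum_(1 <= n < m.+1) \1_(Icell x n) t * v n = 0.
    rewrite big_nat_cond; apply: big1 => n /andP[/andP[n1 nm] _].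
    rewrite indicE memNset ?mul0r //= => tn.
    have := @cells_disj n m.+1 t; rewrite n1 (ltnW (leq_trans nm mN)) /= mN.
    move=> /(_ isT isT tn (set_mem tC)) nE.
    by move: nm; rewrite nE ltnn.
  rewrite indicE tC /= mul1r add0r.
  by rewrite mul1r; exact: ler_wpDl (ge0 _) (lexx _).
rewrite indicE (negbTE tC) /= !mul0r !addr0.
exact: IH (ltnW mN).
Qed.

Lemma measurable_sum_nat (D : set R) (a b : nat) (h : nat -> R -> R) :
  (forall i, (a <= i < b)%N -> measurable_fun D (h i)) ->
  measurable_fun D (fun y => \sum_(a <= i < b) h i y).
Proof.
move=> mh.
have -> : (fun y => \sum_(a <= i < b) h i y) =
  (fun y => \sum_(i <- index_iota a b) (if (a <= i < b)%N then h i y else 0)).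
  by apply/funext => y; rewrite big_nat_cond big_mkcond; apply: eq_bigr => i _; rewrite andbT.
apply: measurable_sum => i; case hi: (a <= i < b)%N; [exact: mh | exact: measurable_cst].
Qed.


Hypothesis Hma : forall n, (1 <= n <= N)%N -> measurable_fun I (alpha n).

Definition alq0 n : R -> R := fun s => if (1 <= n <= N)%N then alpha n s else 0.
Definition alq n : R -> R := alq0 n \_ I.
Definition Pf (g : R -> R) t := \sum_(1 <= n < N.+1)
  \1_(Icell x n) t * (alq n (Linv x N n t) * (g \_ I) (Linv x N n t)).

Lemma m_alq n : measurable_fun setT (alq n).
Proof.
rewrite /alq; apply/(measurable_restrictT _ mI).
rewrite /alq0; case h: (1 <= n <= N)%N; [exact: Hma | exact: measurable_cst].
Qed.

Lemma m_Icell n : measurable (Icell x n).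
Proof. by rewrite /Icell; case: ifP => _; exact: measurable_itv. Qed.

Lemma m_Linv n : measurable_fun setT (Linv x N n).
Proof. by rewrite Linv_aff; exact: maff. Qed.

Lemma m_patch g : measurable_fun I g -> measurable_fun setT (g \_ I : R -> R).
Proof. by move=> mg; apply/(measurable_restrictT _ mI). Qed.

Lemma m_v g n : measurable_fun I g ->
  measurable_fun setT (fun t => alq n (Linv x N n t) * (g \_ I) (Linv x N n t)).
Proof.
move=> mg; apply: measurable_funM.
- exact: measurableT_comp (m_alq n) (m_Linv n).
- exact: measurableT_comp (m_patch mg) (m_Linv n).
Qed.

Lemma mPf g : measurable_fun I g -> measurable_fun setT (Pf g).
Proof.
move=> mg; apply: measurable_sum_nat => n _; apply: measurable_funM.
- exact: measurable_indic (m_Icell n).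
- exact: m_v.
Qed.


Lemma alq_in n s : (1 <= n <= N)%N -> I s -> alq n s = alpha n s.
Proof. by move=> hn Is; rewrite /alq patchE mem_set // /alq0 hn. Qed.

Lemma patch_in (g : R -> R) s : I s -> (g \_ I) s = g s.
Proof. by move=> Is; rewrite patchE mem_set. Qed.

Lemma term_bound (g : R -> R) n (Lam Xr : R) : measurable_fun I g -> (1 <= n <= N)%N ->
  {ae mu, forall t, I t -> `|alpha n t| <= Lam} ->
  (\int[mu]_(t in I) ((g t) ^+ 2)%:E = Xr%:E)%E ->
  (\int[mu]_(t in I) (((alq n (Linv x N n t) * (g \_ I) (Linv x N n t)) ^+ 2)%:E *
      (\1_(Icell x n) t)%:E) <= ((Kc n)^-1 * (Lam ^+ 2 * Xr))%:E)%E.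
Proof.
move=> mg hn Hal HX.
set w := fun t => ((alq n (Linv x N n t) * (g \_ I) (Linv x N n t)) ^+ 2)%:E.
have mw : measurable_fun setT w.
  by apply/measurable_EFinP; apply: measurable_funX; exact: m_v.
have w0 : forall t, (0 <= w t)%E by move=> t; rewrite lee_fin sqr_ge0.
have mwi : forall D, measurable D -> measurable_fun setT (fun t => w t * (\1_D t)%:E)%E.
  move=> D mD; apply: emeasurable_funM => //.
  by apply/measurable_EFinP; exact: measurable_indic.
set pre := aff (pc n) (Kc n) @^-1` I.
have mpre : measurable pre.
  by rewrite -[pre]setTI; exact: (@maff R (pc n) (Kc n) measurableT _ mI).
apply: (@le_trans _ _ (\int[mu]_(t in setT) (w t * (\1_(Icell x n) t)%:E))%E).
  apply: ge0_subset_integral => //; [exact: mI | exact: mwi (m_Icell n) |].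
  by move=> t _; rewrite mule_ge0 ?w0 // lee_fin indicE.
apply: (@le_trans _ _ (\int[mu]_(t in setT) (w t * (\1_pre t)%:E))%E).
  apply: ge0_le_integral => //.
  - by move=> t _; rewrite mule_ge0 ?w0 // lee_fin indicE.
  - exact: mwi (m_Icell n).
  - exact: mwi.
  - move=> t _; apply: lee_pmul; [exact: w0 | by rewrite lee_fin indicE | exact: lexx |].
    rewrite lee_fin !indicE; have [tC|tC] := boolP (t \in Icell x n); last by rewrite ler0n.
    rewrite mem_set // /pre /= -Linv_aff; apply: Linv_in => //.
    exact: cell_sub (set_mem tC).
rewrite -__deprecated__integral_setI_indic // setTI.
set phi := fun s => ((alq n s * (g \_ I) s) ^+ 2)%:E.
have -> : (\int[mu]_(t in pre) w t = \int[mu]_(t in pre) phi (aff (pc n) (Kc n) t))%E.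
  by apply: eq_integral => t _; rewrite /w /phi Linv_aff.
have mphi : measurable_fun setT phi.
  apply/measurable_EFinP; apply: measurable_funX; apply: measurable_funM.
  - exact: m_alq.
  - exact: m_patch.
rewrite aff_integral //.
all: try (exact: mI); try (exact: Kc_gt0); try (by move=> s; rewrite lee_fin sqr_ge0).
rewrite EFinM; apply: lee_pmul.
- by rewrite lee_fin invr_ge0 ltW // Kc_gt0.
- by apply: integral_ge0 => s _; rewrite lee_fin sqr_ge0.
- exact: lexx.
have -> : ((Lam ^+ 2 * Xr)%:E = (Lam ^+ 2)%:E * \int[mu]_(t in I) ((g t) ^+ 2)%:E)%E.
  by rewrite HX EFinM.
rewrite -ge0_integralZl //.
all: try (exact: mI); try (by rewrite lee_fin sqr_ge0); try (by move=> t _; rewrite lee_fin sqr_ge0).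
all: try (by apply/measurable_EFinP; exact: measurable_funX).
apply: ae_ge0_le_integral => //.
- exact: mI.
- by move=> t _; rewrite /phi lee_fin sqr_ge0.
- exact: measurable_funS mphi.
- by move=> t _; rewrite mule_ge0 // lee_fin sqr_ge0.
- apply: emeasurable_funM; first exact: measurable_cst.
  by apply/measurable_EFinP; exact: measurable_funX.
move: Hal; apply: (filterS (Filter := ae_filter_ringOfSetsType _)) => t Ht It.
rewrite /phi -EFinM lee_fin alq_in // patch_in // exprMn.
have := Ht It; rewrite ler_norml => /andP[h1 h2].
have g0 := sqr_ge0 (g t).
have : alpha n t ^+ 2 <= Lam ^+ 2 by nra.
move=> h; nra.
Qed.


Lemma Pbound (g : R -> R) (Lam Xr : R) : measurable_fun I g ->
  (forall n, (1 <= n <= N)%N -> {ae mu, forall t, I t -> `|alpha n t| <= Lam}) ->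
  (\int[mu]_(t in I) ((g t) ^+ 2)%:E = Xr%:E)%E ->
  (\int[mu]_(t in I) ((Pf g t) ^+ 2)%:E <= (Lam ^+ 2 * Xr)%:E)%E.
Proof.
move=> mg Hal HX.
set v := fun n t => alq n (Linv x N n t) * (g \_ I) (Linv x N n t).
have mf : forall n, measurable_fun I (fun t => ((v n t) ^+ 2)%:E * (\1_(Icell x n) t)%:E)%E.
  move=> n; apply: emeasurable_funM.
  - by apply/measurable_EFinP; apply: measurable_funX; apply: measurable_funS (m_v n mg).
  - by apply/measurable_EFinP; exact: measurable_indic (m_Icell n).
have step1 : (\int[mu]_(t in I) ((Pf g t) ^+ 2)%:E <= \int[mu]_(t in I)
   (\sum_(1 <= n < N.+1) (((v n t) ^+ 2)%:E * (\1_(Icell x n) t)%:E)))%E.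
  apply: ge0_le_integral => //.
  - exact: mI.
  - by move=> t _; rewrite lee_fin sqr_ge0.
  - apply/measurable_EFinP; apply: measurable_funX; apply: measurable_funS (mPf mg) => //; exact: mI.
  - by apply: emeasurable_sum => n; exact: mf.
  - move=> t _; under eq_bigr do rewrite -EFinM; rewrite sumEFin lee_fin.
    have := sq_cells (fun n => v n t) t.
    by move=> H; apply: (le_trans H); apply: ler_sum => n _; rewrite mulrC.
apply: le_trans step1 _.
rewrite ge0_integral_sum //; first last.
- by move=> n t _; rewrite -EFinM lee_fin mulr_ge0 // ?sqr_ge0 // indicE.
- exact: mI.
apply: (@le_trans _ _ (\sum_(1 <= n < N.+1) ((Kc n)^-1 * (Lam ^+ 2 * Xr))%:E)%E).
  rewrite big_nat_cond [X in (_ <= X)%E]big_nat_cond; apply: lee_sum => n /andP[hn _].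
  exact: (term_bound mg hn (Hal n hn) HX).
by rewrite sumEFin -mulr_suml sum_a mul1r.
Qed.

End Main.

Unset Implicit Arguments.

Theorem theorem6p14 (R : realType) (N : nat) (x : nat -> R)
  (alpha : nat -> R -> R) (f : nat -> R -> R) (h : nat -> R -> R) :
  frac_partition x N ->
  scale_ok x N alpha ->
  riesz_seq x N f ->
  (forall m, is_frac_conv x N alpha (f m) (fun=> 0) (h m)) ->
  riesz_seq x N h.
Proof.
move=> [HN Hx] [Hma [Lam0 [Lam0lt Hal0]]] [Hf [A [B [A0 [B0 HAB]]]]] Hh.
set I := Iint x N.
have mI' : measurable I by exact: mI.
set Lam := Num.max Lam0 (1 / 2).
have Lh : 1 / 2 <= Lam by rewrite le_max lexx orbT.
have L1 : Lam < 1 by rewrite gt_max Lam0lt /=; lra.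
have L0 : 0 < Lam by lra.
have Hal : forall n, (1 <= n <= N)%N ->
    {ae lebesgue_measure, forall t, I t -> `|alpha n t| <= Lam}.
  move=> n hn; move: (Hal0 n hn).
  apply: (filterS (Filter := ae_filter_ringOfSetsType _)) => t Ht It.
  by apply: le_trans (Ht It) _; rewrite le_max lexx.
split; first by move=> m; case: (Hh m).
exists (A / 4), (B / (1 - Lam) ^+ 2); split; first by rewrite divr_gt0.
split; first by rewrite divr_gt0 // exprn_gt0 // subr_gt0.
move=> n c.
set S := \sum_(k < n) c k ^+ 2.
have S0 : 0 <= S by apply: sumr_ge0 => k _; exact: sqr_ge0.
set g := fun t => \sum_(k < n) c k * h k t.
set F := fun t => \sum_(k < n) c k * f k t.
have mh : forall k, measurable_fun I (h k) by move=> k; case: (Hh k) => [[]].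
have mf : forall k, measurable_fun I (f k) by move=> k; case: (Hf k).
have mg : measurable_fun I g.
  by apply: measurable_sum => k; apply: measurable_funM => //; exact: measurable_cst.
have mF : measurable_fun I F.
  by apply: measurable_sum => k; apply: measurable_funM => //; exact: measurable_cst.
have finX : (\int[lebesgue_measure]_(t in I) ((g t) ^+ 2)%:E < +oo)%E.
  by apply: L2_lin => // k; case: (Hh k) => [[]].
have X0 : (0 <= \int[lebesgue_measure]_(t in I) ((g t) ^+ 2)%:E)%E.
  by apply: integral_ge0 => t _; rewrite lee_fin sqr_ge0.
set Xr := fine (\int[lebesgue_measure]_(t in I) ((g t) ^+ 2)%:E).
have HX : (\int[lebesgue_measure]_(t in I) ((g t) ^+ 2)%:E = Xr%:E)%E.
  by rewrite fineK // ge0_fin_numE.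
have Xr0 : 0 <= Xr by rewrite -lee_fin -HX.
have HP := Pbound Hx HN Hma mg Hal HX.
set P := Pf N x alpha g.
have mP : measurable_fun I P by apply: measurable_funS (mPf Hma mg).
have Z0 : (0 <= \int[lebesgue_measure]_(t in I) ((P t) ^+ 2)%:E)%E.
  by apply: integral_ge0 => t _; rewrite lee_fin sqr_ge0.
set Zr := fine (\int[lebesgue_measure]_(t in I) ((P t) ^+ 2)%:E).
have HZ : (\int[lebesgue_measure]_(t in I) ((P t) ^+ 2)%:E = Zr%:E)%E.
  by rewrite fineK // ge0_fin_numE // (le_lt_trans HP) // ltry.
have HZr : Zr <= Lam ^+ 2 * Xr by rewrite -lee_fin -HZ.
have [HA HB] := HAB n c.
have Y0 : (0 <= \int[lebesgue_measure]_(t in I) ((F t) ^+ 2)%:E)%E.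
  by apply: integral_ge0 => t _; rewrite lee_fin sqr_ge0.
set Yr := fine (\int[lebesgue_measure]_(t in I) ((F t) ^+ 2)%:E).
have HY : (\int[lebesgue_measure]_(t in I) ((F t) ^+ 2)%:E = Yr%:E)%E.
  by rewrite fineK // ge0_fin_numE // (le_lt_trans HB) // ltry.
have HAr : A * S <= Yr by rewrite -lee_fin -HY.
have HBr : Yr <= B * S by rewrite -lee_fin -HY.
have Hae : {ae lebesgue_measure, forall t, I t -> g t = F t + P t}.
  have := ae_foralln (fun m => (Hh m).2).
  apply: (filterS (Filter := ae_filter_ringOfSetsType _)) => t Ht It.
  rewrite /g /F /P /Pf.
  under eq_bigr do rewrite (Ht _ It).
  rewrite /Top.
  under eq_bigr do rewrite mulrDr.
  rewrite big_split /=; congr (_ + _).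
  under eq_bigr do rewrite mulr_sumr.
  rewrite exchange_big /= [LHS]big_nat_cond [RHS]big_nat_cond.
  apply: eq_bigr => m /andP[hm _].
  have [tC|tC] := boolP (t \in Icell x m); last first.
    rewrite indicE (negbTE tC) mul0r; apply: big1 => k _; by rewrite mul0r mulr0.
  have LI : I (Linv x N m t) by apply: Linv_in => //; exact: cell_sub (set_mem tC).
  rewrite alq_in // patch_in //.
  rewrite !mulr_sumr; apply: eq_bigr => k _; rewrite subr0; ring.
have mFP : measurable_fun I (fun t => F t + P t).
  by apply: measurable_funD; [exact: mF | exact: mP].
have EgFP : (\int[lebesgue_measure]_(t in I) ((g t) ^+ 2)%:E =
    \int[lebesgue_measure]_(t in I) ((F t + P t) ^+ 2)%:E)%E.
  apply: ae_eq_integral => //.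
  all: try (by apply/measurable_EFinP; exact: measurable_funX).
  move: Hae; apply: (filterS (Filter := ae_filter_ringOfSetsType _)) => t Ht It.
    by rewrite Ht.
have mNP : measurable_fun I (fun t => - P t) by exact: measurableT_comp.
have EFgP : (\int[lebesgue_measure]_(t in I) ((F t) ^+ 2)%:E =
    \int[lebesgue_measure]_(t in I) ((g t + - P t) ^+ 2)%:E)%E.
  apply: ae_eq_integral => //.
  all: try (by apply/measurable_EFinP; exact: measurable_funX).
  all: try (by apply/measurable_EFinP; apply: measurable_funX; apply: measurable_funD; [exact: mg | exact: mNP]).
  move: Hae; apply: (filterS (Filter := ae_filter_ringOfSetsType _)) => t Ht It.
    by rewrite Ht // addrK.
have L1' : 0 < 1 - Lam by rewrite subr_gt0.
have W1 := int_weight mI' mF mP L1' L0 (subrK Lam 1).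
rewrite -EgFP HX HY HZ -!EFinM -EFinD lee_fin in W1.
have h12 : (0 : R) < 1 / 2 by [].
have h22 : 1 / 2 + 1 / 2 = 1 :> R by field.
have W2 := int_weight mI' mg mNP h12 h12 h22.
have EZ' : (\int[lebesgue_measure]_(t in I) ((- P t) ^+ 2)%:E =
    \int[lebesgue_measure]_(t in I) ((P t) ^+ 2)%:E)%E.
  by apply: eq_integral => t _; rewrite sqrrN.
rewrite EZ' in W2.
rewrite -EFgP HX HY HZ -!EFinM -EFinD lee_fin in W2.
rewrite HX !lee_fin; split.
- have i2 : (1 / 2 : R)^-1 = 2 by field.
  rewrite i2 in W2.
  have : Lam ^+ 2 * Xr <= Xr.
    rewrite -[X in _ <= X]mul1r; apply: ler_wpM2r => //.
    rewrite expr2; nra.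
  nra.
- have e1 : Lam^-1 * Zr <= Lam * Xr.
    have -> : Lam * Xr = Lam^-1 * (Lam ^+ 2 * Xr) by field; rewrite gt_eqF.
    by apply: ler_wpM2l => //; rewrite invr_ge0 ltW.
  have e2 : (1 - Lam)^-1 * Yr <= (1 - Lam)^-1 * (B * S).
    by apply: ler_wpM2l => //; rewrite invr_ge0 ltW.
  have h2 : (1 - Lam) * Xr <= (1 - Lam)^-1 * (B * S) by lra.
  rewrite -(ler_pM2l L1').
  have -> : (1 - Lam) * (B / (1 - Lam) ^+ 2 * S) = (1 - Lam)^-1 * (B * S).
    by field; rewrite gt_eqF.
  exact: h2.
Qed.
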